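(* Let $X,Y$ be Banach spaces, $F:D(F)\subseteq X\to Y$ a weakly sequentially continuous (nonlinear) operator whose domain $D(F)$ is closed and convex, and let $y\in Y$ be such that $F(x)=y$ has a unique solution $x^\dagger\in D(F)$. Let $V$ be a Banach space continuously embedded in $X$, with strictly finer topology, such that sub-level sets of $\|\cdot\|_V^m$ are weakly sequentially pre-compact in $X$. Fix $\nu,m\ge1$, $\delta_{\max}>0$ (sufficiently small) and $C_{DP}>1$. For $\delta\in(0,\delta_{\max}]$ and $y^\delta\in Y$ with $\|y^\delta-y\|_Y\le\delta$, consider minimizers over $D(F)\cap V$ of $T^\delta_\kappa(x)=\|F(x)-y^\delta\|_Y^\nu+\kappa\|x\|_V^m$, and assume that for every such $\delta,y^\delta$ there are $\kappa_{DP}>0$ and a minimizer $x^\delta_{\kappa_{DP}}$ of $T^\delta_{\kappa_{DP}}$ with $\|F(x^\delta_{\kappa_{DP}})-y^\delta\|_Y=C_{DP}\delta$. Assume: (A1) There are a Banach space $U\supsetneq X$ and constants $0<c_U\le C_U<\infty$ with $c_U\|x-x^\dagger\|_U\le\|F(x)-F(x^\dagger)\|_Y\le C_U\|x-x^\dagger\|_U$ for all $x\in D(F)$, and a neighborhood $B^\dagger\subset X$ of $x^\dagger$ such that $F$ is continuous on $B^\dagger\cap D(F)$. (A2) There are a family of Banach spaces $\{X_s\}_{s\in[0,1]}$, a number $t_0\in(0,\infty)$ and operators $\{P_t\}_{0<t\le t_0}\subset B(U)$ such that: (i) the embeddings $V\hookrightarrow X\hookrightarrow U$ are continuous; (ii)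 $X_0=X$, $X_1=V$, and $X_s\hookrightarrow X_t$ continuously for $0\le t\le s\le1$; (iii) there is $a\ge0$ such that for all $s\in(0,1]$ and $r\in[0,s)$ there is $L>0$ with $\|x\|_{X_r}\le L\|x\|_{X_s}^{\frac{r+a}{a+s}}\|x\|_U^{\frac{s-r}{a+s}}$ for all $x\in X_s$; (iv) for all $s\in[0,1]$ and $t\in(0,t_0]$, $P_tX_s\subset X_s$ and $C_P:=\sup_{0<t\le t_0}\|P_t\|_{X_s\to X_s}<\infty$, and for every $x\in X$ the map $t\mapsto P_tx$ is continuous from $(0,t_0]$ into $X$; (v) for every $0<s<1$ there is $C_{Proj}\ge C_P+1$ such that for all $0<t\le t_0$: $\|P_t-\mathrm{id}\|_{X_s\to U}\le C_{Proj}t^{a+s}$ and $\|P_t\|_{X_s\to V}\le C_{Proj}t^{s-1}$, with $a$ as in (iii). (A3) There are $\theta\in(0,1)$ and $E>0$ with $x^\dagger\in X_\theta$ and $\|x^\dagger\|_{X_\theta}\le E$, and either $x^\dagger$ is an interior point of $D(F)$ or $P_tx^\dagger\in D(F)$ for all $0<t\le t_0$. Then there is a constant $c>0$, independent of $\delta$, such that $\|x^\delta_{\kappa_{DP}}-x^\dagger\|_X\le c\,\delta^{\frac{\theta}{a+\theta}}$ for all sufficiently small $\delta$. *)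

(* Defs.v *)
From HB Require Import structures.
From mathcomp Require Import all_boot all_order all_algebra.
From mathcomp Require Import all_classical all_reals all_analysis.
Set Implicit Arguments. Unset Strict Implicit. Unset Printing Implicit Defensive.
Import Order.TTheory GRing.Theory Num.Theory.
Import numFieldNormedType.Exports.
Local Open Scope classical_set_scope.
Local Open Scope ring_scope.

(* All Banach spaces X_s (s in [0,1]) are modelled as linear subspaces S of
   the ambient Banach space U, equipped with their own norm n : U -> R.  *)

Section Defs.
Context {R : realType}.

Definition lin_subspace (E : lmodType R) (S : set E) : Prop :=
  S 0 /\ forall (a b : R) (x y : E), S x -> S y -> S (a *: x + b *: y).

Definition is_norm_on (E : lmodType R) (S : set E) (n : E -> R) : Prop :=
  (forall x, S x -> 0 <= n x) /\
  (forall x, S x -> n x = 0 -> x = 0) /\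
  (forall (a : R) x, S x -> n (a *: x) = `|a| * n x) /\
  (forall x y, S x -> S y -> n (x + y) <= n x + n y).

Definition banach_sub (E : lmodType R) (S : set E) (n : E -> R) : Prop :=
  lin_subspace S /\ is_norm_on S n /\
  forall u : nat -> E, (forall k, S (u k)) ->
    (forall e : R, 0 < e -> exists N : nat, forall i j : nat, (N <= i)%N -> (N <= j)%N ->
        n (u i - u j) < e) ->
    exists2 x, S x & (fun k => n (u k - x)) @ \oo --> (0 : R).

Definition bdd_lin_functional (E : lmodType R) (S : set E) (n : E -> R)
  (f : E -> R) : Prop :=
  (forall (a b : R) x y, S x -> S y -> f (a *: x + b *: y) = a * f x + b * f y) /\
  exists C : R, forall x, S x -> `|f x| <= C * n x.

Definition weak_cvg (E : lmodType R) (S : set E) (n : E -> R)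
  (u : nat -> E) (x : E) : Prop :=
  forall f, bdd_lin_functional S n f -> (fun k => f (u k)) @ \oo --> f x.

Definition tikhonov (U Y : normedModType R) (F : U -> Y) (nV : U -> R)
  (nu m kappa : R) (ydelta : Y) (x : U) : R :=
  powR `|F x - ydelta| nu + kappa * powR (nV x) m.

Definition is_minimizer (U Y : normedModType R) (F : U -> Y) (D V : set U)
  (nV : U -> R) (nu m kappa : R) (ydelta : Y) (x : U) : Prop :=
  D x /\ V x /\
  forall z, D z -> V z ->
    tikhonov F nV nu m kappa ydelta x <= tikhonov F nV nu m kappa ydelta z.

End Defs.

(* Main.v *)
Require Import Defs.
From HB Require Import structures.
From mathcomp Require Import all_boot all_order all_algebra.
From mathcomp Require Import all_classical all_reals all_analysis.
From mathcomp Require Import ring lra.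
Import Order.TTheory GRing.Theory Num.Theory.
Import numFieldNormedType.Exports.
Local Open Scope classical_set_scope.
Local Open Scope ring_scope.

Lemma pw_le (R : realType) (x y p : R) : 0 <= x -> x <= y -> 0 <= p ->
  powR x p <= powR y p.
Proof.
move=> x0 xy p0; apply: (ge0_ler_powR p0) => //; rewrite nnegrE //.
exact: le_trans xy.
Qed.

Lemma pw_inv (R : realType) (x y p : R) : 0 <= x -> 0 <= y -> 0 < p ->
  powR x p <= powR y p -> x <= y.
Proof.
move=> x0 y0 p0 h; rewrite leNgt; apply/negP => yx.
have := gt0_ltr_powR p0 y0 x0 yx; rewrite ltNge h //.
Qed.

Lemma mono3 (R : realType) (K0 K p n E : R) : K0 <= K -> 0 <= K -> 0 <= p ->
  0 <= n -> n <= E -> K0 * p * n <= K * p * E.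
Proof.
move=> h1 h2 h3 h4 h5; apply: (le_trans (y := K * p * n)).
  by rewrite -!mulrA; apply: ler_wpM2r => //; apply: mulr_ge0.
by apply: ler_wpM2l => //; apply: mulr_ge0.
Qed.

Lemma mono2 (R : realType) (K0 K n E : R) : K0 <= K -> 0 <= K ->
  0 <= n -> n <= E -> K0 * n <= K * E.
Proof.
move=> h1 h2 h4 h5; apply: (le_trans (y := K * n)).
  by apply: ler_wpM2r.
by apply: ler_wpM2l.
Qed.

Lemma interp_bound (R : realType) (L n u A B p q e : R) : 0 <= L ->
  0 <= n -> n <= A -> 0 <= u -> u <= B -> 0 <= p -> 0 <= q ->
  e <= L * powR n p * powR u q -> e <= L * powR A p * powR B q.
Proof.
move=> L0 n0 nA u0 uB p0 q0 h; apply: (le_trans h).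
apply: ler_pM; rewrite ?powR_ge0 ?mulr_ge0 ?powR_ge0 //; last exact: pw_le.
apply: ler_wpM2l => //; exact: pw_le.
Qed.

Lemma pw_prod (R : realType) (C t e q f : R) : 0 <= C -> 0 < t -> e * q = f ->
  powR (C * powR t e) q = powR C q * powR t f.
Proof.
move=> C0 t0 <-; rewrite powRM ?powR_ge0 // powRrM //.
Qed.

Ltac slra := repeat match goal with H : forall _, _ |- _ => clear H end; lra.

Theorem theorem2 (R : realType) (U Y : completeNormedModType R)
  (Xs : R -> set U) (ns : R -> U -> R)
  (F : U -> Y) (D : set U) (y : Y) (xdag : U)
  (nu m dmax CDP : R)
  (cU CU : R) (Bdag : set U)
  (t0 a : R) (P : R -> U -> U)
  (theta E : R)
  (* X := Xs 0 and V := Xs 1 are Banach spaces (more generally all X_s) *)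
  (HXs : forall s, 0 <= s <= 1 -> banach_sub (Xs s) (ns s))
  (* D(F) ⊆ X closed and convex *)
  (HDX : forall x, D x -> Xs 0 x)
  (HDclosed : forall (u : nat -> U) x, (forall k, D (u k)) -> Xs 0 x ->
      (fun k => ns 0 (u k - x)) @ \oo --> (0 : R) -> D x)
  (HDconvex : forall x z (l : R), D x -> D z -> 0 <= l <= 1 ->
      D (l *: x + (1 - l) *: z))
  (* F weakly sequentially continuous *)
  (HFweak : forall (u : nat -> U) x, (forall k, D (u k)) -> D x ->
      weak_cvg (Xs 0) (ns 0) u x ->
      weak_cvg [set: Y] (fun z : Y => `|z|) (fun k => F (u k)) (F x))
  (* x^dagger is the unique solution of F(x) = y in D(F) *)
  (Hxdag : D xdag) (HFxdag : F xdag = y)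
  (Huniq : forall x, D x -> F x = y -> x = xdag)
  (* V strictly finer than X; sublevel sets of ||.||_V^m weakly seq. precompact in X *)
  (HVfiner : ~ (exists C : R, forall x, Xs 1 x -> ns 1 x <= C * ns 0 x))
  (HVcompact : forall (M : R) (u : nat -> U), (forall k, Xs 1 (u k)) ->
      (forall k, powR (ns 1 (u k)) m <= M) ->
      exists phi : nat -> nat, {homo phi : i j / (i < j)%N >-> (i < j)%N} /\
        exists2 x, Xs 0 x & weak_cvg (Xs 0) (ns 0) (fun k => u (phi k)) x)
  (* parameters *)
  (Hnu : 1 <= nu) (Hm : 1 <= m) (Hdmax : 0 < dmax) (HCDP : 1 < CDP)
  (* existence of discrepancy-principle minimizers *)
  (HDP : forall (delta : R) (ydelta : Y), 0 < delta <= dmax -> `|ydelta - y| <= delta ->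
      exists2 kappa : R, 0 < kappa & exists2 x : U,
        is_minimizer F D (Xs 1) (ns 1) nu m kappa ydelta x &
        `|F x - ydelta| = CDP * delta)
  (* (A1) *)
  (HUproper : exists u : U, ~ Xs 0 u)
  (HcU : 0 < cU) (HcCU : cU <= CU)
  (HA1 : forall x, D x ->
      cU * `|x - xdag| <= `|F x - F xdag| /\ `|F x - F xdag| <= CU * `|x - xdag|)
  (HBdagX : forall x, Bdag x -> Xs 0 x)
  (HBdag : exists2 r : R, 0 < r &
      forall x, Xs 0 x -> ns 0 (x - xdag) < r -> Bdag x)
  (HFcont : forall x, Bdag x -> D x -> forall e : R, 0 < e ->
      exists2 eta : R, 0 < eta & forall z, Bdag z -> D z -> ns 0 (z - x) < eta ->
        `|F z - F x| < e)
  (* (A2) *)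
  (Ht0 : 0 < t0)
  (HPlin : forall t, 0 < t <= t0 -> forall (al be : R) (u v : U),
      P t (al *: u + be *: v) = al *: P t u + be *: P t v)
  (HPbdd : forall t, 0 < t <= t0 -> exists C : R, forall u, `|P t u| <= C * `|u|)
  (* (i) *)
  (HVX : exists C : R, forall x, Xs 1 x -> ns 0 x <= C * ns 1 x)
  (HXU : exists C : R, forall x, Xs 0 x -> `|x| <= C * ns 0 x)
  (* (ii) *)
  (Hemb : forall s t, 0 <= t -> t <= s -> s <= 1 ->
      (forall x, Xs s x -> Xs t x) /\
      exists C : R, forall x, Xs s x -> ns t x <= C * ns s x)
  (* (iii) *)
  (Ha : 0 <= a)
  (Hinterp : forall s r, 0 < s <= 1 -> 0 <= r < s ->
      exists2 L : R, 0 < L & forall x, Xs s x ->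
        ns r x <= L * powR (ns s x) ((r + a) / (a + s)) * powR `|x| ((s - r) / (a + s)))
  (* (iv) *)
  (HPinv : forall s t, 0 <= s <= 1 -> 0 < t <= t0 -> forall x, Xs s x -> Xs s (P t x))
  (HCP : forall s, 0 <= s <= 1 -> exists C : R,
      forall t, 0 < t <= t0 -> forall x, Xs s x -> ns s (P t x) <= C * ns s x)
  (HPcont : forall x, Xs 0 x -> forall t, 0 < t <= t0 -> forall e : R, 0 < e ->
      exists2 eta : R, 0 < eta & forall t', 0 < t' <= t0 -> `|t' - t| < eta ->
        ns 0 (P t' x - P t x) < e)
  (* (v) ; "C_Proj >= C_P + 1" is written as: C_Proj - 1 bounds all ||P_t||_{X_s -> X_s} *)
  (HProj : forall s, 0 < s < 1 -> exists CProj : R,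
      (forall t, 0 < t <= t0 -> forall x, Xs s x -> ns s (P t x) <= (CProj - 1) * ns s x) /\
      forall t, 0 < t <= t0 -> forall x, Xs s x ->
        `|P t x - x| <= CProj * powR t (a + s) * ns s x /\
        Xs 1 (P t x) /\ ns 1 (P t x) <= CProj * powR t (s - 1) * ns s x)
  (* (A3) *)
  (Htheta : 0 < theta < 1) (HE : 0 < E)
  (HxdagS : Xs theta xdag) (HxdagE : ns theta xdag <= E)
  (HA3 : (exists2 r : R, 0 < r & forall x, Xs 0 x -> ns 0 (x - xdag) < r -> D x)
         \/ (forall t, 0 < t <= t0 -> D (P t xdag))) :
  exists2 c : R, 0 < c & exists2 delta1 : R, 0 < delta1 &
    forall (delta : R) (ydelta : Y) (kappa : R) (x : U),
      0 < delta <= Num.min delta1 dmax -> `|ydelta - y| <= delta -> 0 < kappa ->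
      is_minimizer F D (Xs 1) (ns 1) nu m kappa ydelta x ->
      `|F x - ydelta| = CDP * delta ->
      ns 0 (x - xdag) <= c * powR delta (theta / (a + theta)).
Proof.
clear HDclosed HDconvex HFweak Huniq HVfiner HVcompact HDP HUproper HBdagX HBdag HFcont HPlin HPbdd HVX HXU Hemb HCP HPcont.
have h0 : 0 <= (0:R) <= 1 by apply/andP; split; slra.
have h1 : 0 <= (1:R) <= 1 by apply/andP; split; slra.
case/andP: Htheta => th0 th1.
have hth : 0 <= theta <= 1 by apply/andP; split; slra.
have hθ1 : 0 < theta <= 1 by apply/andP; split; slra.
have hθ2 : 0 <= (0:R) < theta by apply/andP; split; slra.
have hθ3 : 0 < theta < 1 by apply/andP; split; slra.
have h11 : 0 < (1:R) <= 1 by apply/andP; split; slra.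
have h12 : 0 <= (0:R) < 1 by apply/andP; split; slra.
have sub s x z : 0 <= s <= 1 -> Xs s x -> Xs s z -> Xs s (x - z).
  move=> hs hx hz; have [[_ L] _] := HXs s hs.
  by have := L 1 (-1) x z hx hz; rewrite scale1r scaleN1r.
have nge0 s x : 0 <= s <= 1 -> Xs s x -> 0 <= ns s x.
  by move=> hs hx; have [_ [[N _] _]] := HXs s hs; apply: N.
have nadd s x z : 0 <= s <= 1 -> Xs s x -> Xs s z -> ns s (x + z) <= ns s x + ns s z.
  by move=> hs hx hz; have [_ [[_ [_ [_ Tr]]] _]] := HXs s hs; apply: Tr.
have nsub s x z : 0 <= s <= 1 -> Xs s x -> Xs s z -> ns s (x - z) <= ns s x + ns s z.
  move=> hs hx hz; have [[_ L] [[_ [_ [Sc Tr]]] _]] := HXs s hs.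
  have hz' : Xs s (- z).
    by have := L 0 (-1) z z hz hz; rewrite scale0r add0r scaleN1r.
  have e : ns s (- z) = ns s z by rewrite -scaleN1r Sc // normrN normr1 mul1r.
  by rewrite -e; apply: Tr.
have aθ : 0 < a + theta by slra.
have a1 : 0 < a + 1 by slra.
have [L1 L1p HI1] := Hinterp theta 0 hθ1 hθ2.
have [L2 L2p HI2] := Hinterp 1 0 h11 h12.
rewrite !add0r !subr0 in HI1 HI2.
have [K0 [HK0a HK0]] := HProj theta hθ3.
pose K := Num.max K0 1.
have K0K : K0 <= K by rewrite le_max lexx.
have K1 : 1 <= K by rewrite le_max lexx orbT.
have KE0 : 0 < K * E by apply: mulr_gt0 => //; slra.
have xdX0 : Xs 0 xdag by apply: HDX.
have nxd0 : 0 <= ns theta xdag by apply: nge0.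
have Pz1 t : 0 < t <= t0 -> Xs 1 (P t xdag) /\ ns 1 (P t xdag) <= K * powR t (theta - 1) * E.
  move=> ht; have [_ [? h]] := HK0 t ht xdag HxdagS; split => //.
  apply: le_trans h _; apply: mono3 => //; rewrite ?powR_ge0 //; slra.
have PzU t : 0 < t <= t0 -> `|P t xdag - xdag| <= K * powR t (a + theta) * E.
  move=> ht; have [h _] := HK0 t ht xdag HxdagS.
  apply: le_trans h _; apply: mono3 => //; rewrite ?powR_ge0 //; slra.
have Pzθ t : 0 < t <= t0 -> ns theta (P t xdag - xdag) <= K * E.
  move=> ht; have hP := HPinv theta t hth ht xdag HxdagS.
  apply: le_trans (nsub _ _ _ hth hP HxdagS) _.
  have := HK0a t ht xdag HxdagS.
  have : (K0 - 1) * ns theta xdag <= (K - 1) * E by apply: mono2 => //; slra.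
  slra.
have B1 t : 0 < t <= t0 -> ns 0 (P t xdag - xdag) <= L1 * (K * E) * powR t theta.
  move=> ht; have tp : 0 < t by case/andP: ht.
  have hP := HPinv theta t hth ht xdag HxdagS.
  have hw := sub _ _ _ hth hP HxdagS.
  have := HI1 _ hw.
  move/(@interp_bound R _ _ _ (K * E) ((K * E) * powR t (a + theta))).
  have KE0w : 0 <= K * E by apply: ltW.
  rewrite (@pw_prod R _ _ _ _ theta) //; last first.
    by rewrite mulrC mulfVK //; apply: lt0r_neq0.
  rewrite mulrA -(mulrA L1) -powRD; last by apply/implyP => _; apply: lt0r_neq0.
  have -> : a / (a + theta) + theta / (a + theta) = 1.
    by rewrite -mulrDl mulfV //; apply: lt0r_neq0.
  rewrite powRr1; last slra.
  apply; rewrite ?normr_ge0 ?divr_ge0 //; try slra.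
  - exact: nge0 hth hw.
  - exact: Pzθ.
  - by rewrite mulrAC; apply: PzU.
have M0 : 0 < L1 * (K * E) by apply: mulr_gt0.
have [t1 [t1p [t1t0 HD1]]] : exists t1, 0 < t1 /\ t1 <= t0 /\
    forall t, 0 < t <= t1 -> D (P t xdag).
  case: HA3 => [[r r0 Hr]|HP]; last first.
    by exists t0; split => //; split => //; slra.
  pose s := powR (r / (2 * (L1 * (K * E)))) (theta^-1).
  have s0 : 0 < s by apply: powR_gt0; apply: divr_gt0 => //; slra.
  exists (Num.min t0 s); split; first by rewrite lt_min Ht0 s0.
  split; first by rewrite ge_min lexx.
  move=> t /andP[tp]; rewrite le_min => /andP[tt0 ts].
  have ht : 0 < t <= t0 by apply/andP; split.
  apply: Hr; first exact: HPinv h0 ht _ xdX0.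
  apply: (le_lt_trans (B1 t ht)).
  have : powR t theta <= powR s theta by apply: pw_le => //; slra.
  rewrite /s -powRrM mulVf ?powRr1; last by apply: lt0r_neq0.
  2: by apply: divr_ge0; slra.
  move=> h; have h2 : L1 * (K * E) * powR t theta <= L1 * (K * E) * (r / (2 * (L1 * (K * E)))).
    by apply: ler_wpM2l => //; slra.
  apply: (le_lt_trans h2).
  have -> : L1 * (K * E) * (r / (2 * (L1 * (K * E)))) = r / 2.
    by field; rewrite !lt0r_neq0 //; slra.
  slra.
have CUp : 0 < CU by slra.
have CKE : 0 < CU * K * E by rewrite -mulrA; apply: mulr_gt0.
pose k := (CDP - 1) / (CU * K * E).
have kdef : k = (CDP - 1) / (CU * K * E) by [].
clearbody k.
have k0 : 0 < k by rewrite kdef; apply: divr_gt0 => //; slra.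
pose delta1 := powR t1 (a + theta) / k.
have delta1def : delta1 = powR t1 (a + theta) / k by [].
clearbody delta1.
pose A := (CDP + 1) / (cU * k) + K * E.
have Adef : A = (CDP + 1) / (cU * k) + K * E by [].
clearbody A.
have A0 : 0 <= A.
  rewrite Adef; apply: addr_ge0; last slra.
  apply: divr_ge0; first slra. by apply: mulr_ge0; slra.
pose C1 := L2 * powR (2 * (K * E)) (a / (a + 1)) * powR A (1 / (a + 1)).
have C1def : C1 = L2 * powR (2 * (K * E)) (a / (a + 1)) * powR A (1 / (a + 1)) by [].
clearbody C1.
have C10 : 0 <= C1 by rewrite C1def !mulr_ge0 ?powR_ge0 //; slra.
pose gam := theta / (a + theta).
have gamdef : gam = theta / (a + theta) by [].
clearbody gam.
exists ((C1 + L1 * (K * E)) * powR k gam + 1).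
  have := powR_ge0 k gam.
  have : 0 <= (C1 + L1 * (K * E)) * powR k gam by rewrite mulr_ge0 ?powR_ge0 //; slra.
  slra.
exists delta1; first by rewrite delta1def; apply: divr_gt0 => //; apply: powR_gt0.
move=> delta ydelta kappa x /andP[dp]; rewrite le_min => /andP[dd1 _] hy hk [xD [xV Hmin]] hdisc.
pose t := powR (k * delta) ((a + theta)^-1).
have tdef : t = powR (k * delta) ((a + theta)^-1) by [].
clearbody t.
have kd0 : 0 < k * delta by apply: mulr_gt0.
have tp : 0 < t by rewrite tdef; apply: powR_gt0.
have tpow : powR t (a + theta) = k * delta.
  rewrite tdef -powRrM mulVf; [by rewrite powRr1 // ltW | exact: lt0r_neq0].
have tt1 : t <= t1.
  have e1 : k * delta1 = powR t1 (a + theta).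
    by rewrite delta1def; field; apply: lt0r_neq0.
  have : t <= powR (k * delta1) ((a + theta)^-1).
    rewrite tdef; apply: pw_le; [exact: ltW | by apply: ler_wpM2l => //; apply: ltW | ].
    by rewrite invr_ge0; apply: ltW.
  rewrite e1 -powRrM mulfV; [by rewrite powRr1 // ltW | exact: lt0r_neq0].
have ht : 0 < t <= t0 by apply/andP; split; slra.
have zD : D (P t xdag) by apply: HD1; apply/andP; split.
have [zV zVb] := Pz1 t ht.
have zU := PzU t ht; rewrite tpow in zU.
have [_ FzU] := HA1 _ zD.
have Fz : `|F (P t xdag) - ydelta| <= CDP * delta.
  have -> : F (P t xdag) - ydelta = (F (P t xdag) - F xdag) + (F xdag - ydelta).
    by rewrite addrA subrK.
  apply: le_trans (ler_normD _ _) _.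
  rewrite HFxdag (distrC y). rewrite HFxdag in FzU.
  have e2 : CU * (K * (k * delta) * E) = (CDP - 1) * delta.
    by rewrite kdef; field; rewrite !lt0r_neq0 //; slra.
  have : CU * `|P t xdag - xdag| <= CU * (K * (k * delta) * E).
    by apply: ler_wpM2l => //; slra.
  slra.
have hmin := Hmin _ zD zV.
rewrite /tikhonov hdisc in hmin.
have hp : powR `|F (P t xdag) - ydelta| nu <= powR (CDP * delta) nu.
  by apply: pw_le => //; slra.
have kx : kappa * powR (ns 1 x) m <= kappa * powR (ns 1 (P t xdag)) m by slra.
rewrite ler_pM2l // in kx.
have xz : ns 1 x <= ns 1 (P t xdag).
  by apply: pw_inv kx; [exact: nge0 h1 xV | exact: nge0 h1 zV | slra].
pose w := x - P t xdag.
have wdef : w = x - P t xdag by [].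
clearbody w.
have wV : Xs 1 w by rewrite wdef; exact: sub 1 _ _ h1 xV zV.
have wVb : ns 1 w <= 2 * (K * E) * powR t (theta - 1).
  have := nsub 1 _ _ h1 xV zV; rewrite -wdef; slra.
have xU : `|x - xdag| <= (CDP + 1) * delta / cU.
  have [h _] := HA1 _ xD.
  have : `|F x - F xdag| <= CDP * delta + delta.
    have -> : F x - F xdag = (F x - ydelta) + (ydelta - F xdag) by rewrite addrA subrK.
    apply: le_trans (ler_normD _ _) _; rewrite hdisc HFxdag; slra.
  move=> h'; rewrite ler_pdivlMr //; slra.
have wU : `|w| <= A * powR t (a + theta).
  rewrite tpow.
  have -> : w = (x - xdag) - (P t xdag - xdag) by rewrite wdef opprB addrA subrK.
  apply: le_trans (ler_normB _ _) _.
  have eA : A * (k * delta) = (CDP + 1) * delta / cU + K * (k * delta) * E.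
    by rewrite Adef; field; rewrite !lt0r_neq0 //; slra.
  slra.
have KE2 : 0 <= 2 * (K * E) by slra.
have hw0 : ns 0 w <= C1 * powR t theta.
  have := HI2 _ wV.
  move/(@interp_bound R _ _ _ (2 * (K * E) * powR t (theta - 1)) (A * powR t (a + theta))).
  rewrite (@pw_prod R (2 * (K * E)) t (theta - 1) (a / (a + 1)) ((theta - 1) * (a / (a + 1)))) //.
  rewrite (@pw_prod R A t (a + theta) (1 / (a + 1)) ((a + theta) * (1 / (a + 1)))) //.
  have ee : (theta - 1) * (a / (a + 1)) + (a + theta) * (1 / (a + 1)) = theta.
    by field; apply: lt0r_neq0.
  have eC : L2 * (powR (2 * (K * E)) (a / (a + 1)) * powR t ((theta - 1) * (a / (a + 1)))) *
      (powR A (1 / (a + 1)) * powR t ((a + theta) * (1 / (a + 1)))) = C1 * powR t theta.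
    rewrite -{3}ee powRD; last by apply/implyP => _; apply: lt0r_neq0.
    by rewrite C1def; ring.
  rewrite eC; apply; rewrite ?normr_ge0 ?divr_ge0 //; try slra.
  exact: nge0 h1 wV.
have hz0 := B1 t ht.
have wX0 : Xs 0 w by rewrite wdef; apply: sub h0 (HDX _ xD) (HDX _ zD).
have zdX0 : Xs 0 (P t xdag - xdag) by apply: sub h0 (HDX _ zD) xdX0.
have -> : x - xdag = w + (P t xdag - xdag) by rewrite wdef addrA subrK.
apply: le_trans (nadd 0 _ _ h0 wX0 zdX0) _.
have tth : powR t theta = powR k gam * powR delta gam.
  rewrite tdef -powRrM gamdef [_^-1 * _]mulrC powRM //; apply: ltW => //.
rewrite tth in hw0 hz0.
have := powR_ge0 delta gam.
rewrite -gamdef.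
slra.
Qed.
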